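(* Let $R=(V,E_R,w)$ be a connected weighted graph on a vertex set $V$ with $|V|=n\ge 3$ and edge weights in $[0,B]$. Then $$\frac{\mathrm{RS}_f(R)}{\mathrm{GS}_f}=\frac{\max_{S\subset V:\ \exists u\in S,\,v\in V\setminus S,\ \{u,v\}\notin E_R} w_1(S)}{B},$$ where $w_1(S)$ is the minimum weight among edges of $E_R$ crossing the cut $(S,V\setminus S)$.
   Context: For a weighted graph $G$, $f(G)$ denotes the total weight of a minimum spanning tree of $G$. Two graphs on the same vertex set $V$ are edge-weight adjacent if one is obtained from the other by adding one edge $e\in\binom{V}{2}$ not already present, with a weight in $[0,B]$. The global sensitivity $\mathrm{GS}_f$ is the maximum of $|f(G)-f(G')|$ over all pairs of edge-weight adjacent connected graphs on $n$ vertices with edge weights in $[0,B]$. The retain sensitivity is $\mathrm{RS}_f(R)=\max|f((V,E_R))-f((V,E_R\cup\{e\}))|$, the maximum over edges $e\in\binom{V}{2}\setminus E_R$ and over weights $w(e)\in[0,B]$. *)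

(* Defs.v *)
From HB Require Import structures.
From mathcomp Require Import all_boot all_order all_algebra.
From mathcomp Require Import classical_sets reals.
Set Implicit Arguments. Unset Strict Implicit. Unset Printing Implicit Defensive.
Import Order.TTheory GRing.Theory Num.Theory.
Local Open Scope ring_scope.
Local Open Scope classical_set_scope.

Section Graphs.
Variables (V : finType) (R : realType).

Definition rmin (x y : R) : R := Num.min x y.
Definition rmax (x y : R) : R := Num.max x y.

Definition is_graph (E : {set {set V}}) : bool := [forall e in E, #|e| == 2%N].

Definition adj (E : {set {set V}}) : rel V :=
  fun x y => (x != y) && ([set x; y]%SET \in E).

Definition gconnected (E : {set {set V}}) : bool :=
  [forall x, forall y, connect (adj E) x y].

(* T is a spanning tree of (V,E): a subgraph of E spanning V which is connected
   and acyclic (= minimally connected: removing any edge disconnects it). *)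
Definition spanning_tree (E T : {set {set V}}) : bool :=
  [&& T \subset E, gconnected T & [forall e in T, ~~ gconnected (T :\ e)]].

(* f(G): total weight of a minimum spanning tree of (V, E, w).
   (The default value \sum_(e in E) w e is an upper bound of every spanning
   tree weight when weights are nonnegative, so it is never selected.) *)
Definition mst (E : {set {set V}}) (w : {set V} -> R) : R :=
  \big[rmin/(\sum_(e in E) w e)]_(T : {set {set V}} | spanning_tree E T)
     \sum_(e in T) w e.

Definition weights_in (B : R) (E : {set {set V}}) (w : {set V} -> R) : Prop :=
  forall e, e \in E -> 0 <= w e <= B.

Definition upd (w : {set V} -> R) (e : {set V}) (t : R) : {set V} -> R :=
  fun x => if x == e then t else w x.

Definition GS (B : R) : R :=
  sup [set d : R | exists (E : {set {set V}}) (w : {set V} -> R) (e : {set V}) (t : R),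
        [/\ is_graph E, gconnected E & weights_in B E w] /\
        [/\ #|e| = 2%N, e \notin E, 0 <= t <= B & gconnected (e |: E)] /\
        d = `|mst E w - mst (e |: E) (upd w e t)|].

Definition RS (B : R) (E : {set {set V}}) (w : {set V} -> R) : R :=
  sup [set d : R | exists (e : {set V}) (t : R),
        [/\ #|e| = 2%N, e \notin E & 0 <= t <= B] /\
        d = `|mst E w - mst (e |: E) (upd w e t)|].

Definition crosses (S e : {set V}) : bool := #|e :&: S| == 1%N.

(* w_1(S): minimum weight of an edge of E crossing the cut (S, V \ S).
   (The default B is only used when no edge crosses, which cannot happen
   for a connected graph and a nontrivial cut.) *)
Definition w1 (B : R) (E : {set {set V}}) (w : {set V} -> R) (S : {set V}) : R :=
  \big[rmin/B]_(e in E | crosses S e) w e.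

Definition cut_has_nonedge (E : {set {set V}}) (S : {set V}) : bool :=
  [exists u in S, exists v in ~: S, [set u; v]%SET \notin E].

Definition max_w1 (B : R) (E : {set {set V}}) (w : {set V} -> R) : R :=
  \big[rmax/0]_(S : {set V} | cut_has_nonedge E S) w1 B E w S.

End Graphs.

(* Main.v *)
Require Import Defs.
From HB Require Import structures.
From mathcomp Require Import all_boot all_order all_algebra.
From mathcomp Require Import classical_sets reals.
From mathcomp Require Import fintype finset.
From Stdlib Require Classical_Prop.
From mathcomp Require Import zify.
Import Order.TTheory GRing.Theory Num.Theory.
Local Open Scope ring_scope.
Set Implicit Arguments. Unset Strict Implicit. Unset Printing Implicit Defensive.

Section Aux.
Variables (V : finType) (R : realType).
Implicit Types (E F T C : {set {set V}}) (w : {set V} -> R).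

Lemma adj_sym E : symmetric (adj E).
Proof. by move=> x y; rewrite /adj eq_sym setUC. Qed.

Lemma conn_sym E x y : connect (adj E) x y = connect (adj E) y x.
Proof. exact: (sym_connect_sym (adj_sym E)). Qed.

Lemma closed_conn (r : rel V) (a : pred V) x y :
  (forall p q, r p q -> a p -> a q) -> a x -> connect r x y -> a y.
Proof.
move=> cl ax /connectP [p pth ->]; elim: p x ax pth => [|z p IH] x ax //=.
by case/andP=> rxz pth; exact: IH (cl _ _ rxz ax) pth.
Qed.

Lemma conn_mono E F x y : E \subset F -> connect (adj E) x y -> connect (adj F) x y.
Proof.
move=> sEF; apply: connect_sub => a b /andP[nab abE]; apply: connect1.
by rewrite /adj nab (subsetP sEF).
Qed.

Lemma gconnP E : reflect (forall x y, connect (adj E) x y) (gconnected E).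
Proof.
apply: (iffP forallP) => [H x y| H x]; first exact: (forallP (H x) y).
by apply/forallP => y; exact: H.
Qed.

Lemma gconn_root E u : (forall x, connect (adj E) u x) -> gconnected E.
Proof.
move=> H; apply/gconnP => x y; apply: connect_trans (H y).
by rewrite conn_sym.
Qed.

Lemma gconn_mono E F : E \subset F -> gconnected E -> gconnected F.
Proof. by move=> sEF /gconnP H; apply/gconnP => x y; apply: conn_mono sEF (H x y). Qed.

Lemma adj_edge E x y : adj E x y -> (x != y) /\ [set x; y] \in E.
Proof. by case/andP. Qed.

Lemma split_conn T y z x : connect (adj T) y x ->
  connect (adj (T :\ [set y; z])) y x || connect (adj (T :\ [set y; z])) z x.
Proof.
set f := [set y; z].
move=> Hyx.
apply: (@closed_conn (adj T) [pred x | connect (adj (T :\ f)) y x || connect (adj (T :\ f)) z x] y x _ _ Hyx); last by rewrite /= connect0.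
move=> p q /andP[npq pqT] /= H.
have [pqf|pqf] := eqVneq [set p; q] f.
  have : q \in f by rewrite -pqf set22.
  by rewrite !inE => /orP[]/eqP->; rewrite connect0 ?orbT.
have apq : adj (T :\ f) p q by rewrite /adj npq !inE pqf.
by case/orP: H => H; [rewrite (connect_trans H (connect1 apq)) | rewrite (connect_trans H (connect1 apq)) orbT].
Qed.

Lemma exists_st C : gconnected C -> exists T, spanning_tree C T.
Proof.
move=> cC.
have P0 : (C \subset C) && gconnected C by rewrite subxx cC.
case: (@arg_minnP _ C (fun T => (T \subset C) && gconnected T) (fun T => #|T|) P0) => T /andP[sTC cT] minT.
exists T; rewrite /spanning_tree sTC cT /=; apply/forallP => e; apply/implyP => eT.
apply/negP => cTe.
have := minT (T :\ e); rewrite (subset_trans (subsetDl T [set e]) sTC) cTe => /(_ isT).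
by rewrite (cardsD1 e T) eT add1n ltnn.
Qed.


Definition nonneg E w := forall e, e \in E -> 0 <= w e.

Lemma sum_ge0 E w : nonneg E w -> 0 <= \sum_(e in E) w e.
Proof. by move=> nn; apply: sumr_ge0 => e /nn. Qed.

Lemma sum_sub_le w (A B : {set {set V}}) : A \subset B -> nonneg B w ->
  \sum_(e in A) w e <= \sum_(e in B) w e.
Proof.
move=> sAB nn; rewrite [X in _ <= X](big_setID A) /= (setIidPr sAB) lerDl.
by apply: sumr_ge0 => e; rewrite inE => /andP[_ /nn].
Qed.

Lemma mst_le_tree E w T : spanning_tree E T -> mst E w <= \sum_(e in T) w e.
Proof. by move=> sT; rewrite /mst /rmin; apply: bigmin_le_cond. Qed.

Lemma st_sub E T : spanning_tree E T -> T \subset E.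
Proof. by case/and3P. Qed.

Lemma st_conn E T : spanning_tree E T -> gconnected T.
Proof. by case/and3P. Qed.

Lemma st_min E T e : spanning_tree E T -> e \in T -> ~~ gconnected (T :\ e).
Proof. by case/and3P => _ _ /forallP H eT; move: (H e); rewrite eT. Qed.

Lemma st_mono E F T : E \subset F -> spanning_tree E T -> spanning_tree F T.
Proof.
move=> sEF /and3P[sTE cT mT]; rewrite /spanning_tree cT mT (subset_trans sTE sEF).
by [].
Qed.

Lemma mst_le E w C : nonneg E w -> C \subset E -> gconnected C ->
  mst E w <= \sum_(e in C) w e.
Proof.
move=> nn sCE cC; have [T sT] := exists_st cC.
apply: le_trans (mst_le_tree w (st_mono sCE sT)) _.
apply: sum_sub_le (st_sub sT) _ => e eC; exact: nn (subsetP sCE _ eC).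
Qed.

Lemma mst_ge E w x : (forall T, spanning_tree E T -> x <= \sum_(e in T) w e) ->
  x <= \sum_(e in E) w e -> x <= mst E w.
Proof. by move=> H1 H2; rewrite /mst /rmin; apply: le_bigmin. Qed.

Lemma mst_ge0 E w : nonneg E w -> 0 <= mst E w.
Proof.
move=> nn; apply: mst_ge; last exact: sum_ge0.
move=> T sT; apply: sum_ge0 => e eT; exact: nn (subsetP (st_sub sT) _ eT).
Qed.

Lemma mst_att E w : nonneg E w -> gconnected E ->
  exists T, spanning_tree E T /\ mst E w = \sum_(e in T) w e.
Proof.
move=> nn cE; have [T0 sT0] := exists_st cE.
rewrite /mst /rmin (bigmin_eq_arg _ _ _ _ sT0).
  by eexists; split; last reflexivity; case: arg_minP.
move=> T sT; apply: sum_sub_le (st_sub sT) nn.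
Qed.


Lemma path_avoid T x (g : {set V}) a p : path (adj T) a p -> x \notin a :: p ->
  x \in g -> path (adj (T :\ g)) a p.
Proof.
elim: p a => [|b p IH] a //= /andP[/andP[nab abT] pth].
rewrite !inE negb_or => /andP[xa xbp] xg.
rewrite IH // andbT /adj nab !inE abT andbT.
apply/negP => /eqP abg; move: xg; rewrite -abg !inE (negbTE xa) /=.
by move=> xb; move: xbp; rewrite xb.
Qed.

Lemma path_cross T (S : {set V}) p x : path (adj T) x p -> uniq (x :: p) ->
  x \in S -> last x p \notin S ->
  exists y z, [/\ adj T y z, y \in S, z \notin S,
    connect (adj (T :\ [set y; z])) x y &
    connect (adj (T :\ [set y; z])) z (last x p)] /\ (y \in x :: p) && (z \in x :: p).
Proof.
elim: p x => [|a p IH] x /=; first by move=> _ _ ->.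
move=> /andP[axa pth] /andP[xap up] xS lS.
have [aS|aS] := boolP (a \in S).
  have [y [z [[ayz yS zS cay czl] /andP[yap zap]]]] := IH a pth up aS lS.
  exists y, z; split; last by rewrite (@mem_behead _ (x :: a :: p) _ yap) (@mem_behead _ (x :: a :: p) _ zap).
  split=> //; apply: connect_trans cay; apply: connect1.
  case/andP: axa => nxa xaT; rewrite /adj nxa !inE xaT andbT.
  apply/negP => /eqP e; have : x \in [set y; z] by rewrite -e set21.
  by rewrite !inE => /orP[]/eqP xe; move: xap; rewrite xe ?yap ?zap.
exists x, a; split; last by rewrite !inE eqxx /= eqxx orbT.
split=> //.
apply/connectP; exists p => //; apply: path_avoid pth xap _; exact: set21.
Qed.


Lemma upd_at w (e : {set V}) t : upd w e t e = t.
Proof. by rewrite /upd eqxx. Qed.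

Lemma sum_upd_notin w e t (A : {set {set V}}) : e \notin A ->
  \sum_(x in A) upd w e t x = \sum_(x in A) w x.
Proof.
move=> eA; apply: eq_bigr => x xA; rewrite /upd; case: eqP => // xe.
by move: eA; rewrite -xe xA.
Qed.

Lemma sum_upd_in w e t (A : {set {set V}}) : e \in A ->
  \sum_(x in A) upd w e t x = t + \sum_(x in A :\ e) w x.
Proof.
move=> eA; rewrite (big_setD1 _ eA) /= {1}/upd eqxx sum_upd_notin //.
by rewrite !inE eqxx.
Qed.

Lemma nonneg_upd E w e t : nonneg E w -> 0 <= t -> nonneg (e |: E) (upd w e t).
Proof.
move=> nn t0 x; rewrite !inE /upd; case: eqP => //= _; exact: nn.
Qed.

Lemma cross_pair (S f : {set V}) : #|f| = 2%N -> crosses S f ->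
  exists p q, [/\ p \in S, q \notin S & f = [set p; q]].
Proof.
move/eqP/cards2P => [x [y [xy ->]]]; rewrite /crosses.
have [xS|xS] := boolP (x \in S); have [yS|yS] := boolP (y \in S).
- rewrite (setIidPl _); first by rewrite cards2 xy.
  by apply/subsetP => z; rewrite !inE => /orP[]/eqP->.
- by move=> _; exists x, y.
- by move=> _; exists y, x; rewrite setUC.
- have -> : [set x; y] :&: S = set0.
    apply/setP => z; rewrite !inE; apply/negP => /andP[/orP[]/eqP-> ].
      by rewrite (negbTE xS).
    by rewrite (negbTE yS).
  by rewrite cards0.
Qed.

Lemma cross_of (S : {set V}) p q : p \in S -> q \notin S -> crosses S [set p; q].
Proof.
move=> pS qS; rewrite /crosses; have -> : [set p; q] :&: S = [set p].
  apply/setP => z; rewrite !inE; have [->|zp] := eqVneq z p; first by rewrite pS.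
  by rewrite /=; case: eqP => // ->; rewrite (negbTE qS).
by rewrite cards1.
Qed.

Lemma reconnect E w e T u v : nonneg E w -> spanning_tree (e |: E) T -> e \in T ->
  e = [set u; v] ->
  let K := [set x | connect (adj (T :\ e)) u x] in
  v \notin K /\
  (forall p q, p \in K -> q \notin K -> [set p; q] \in E ->
     mst E w <= \sum_(x in T :\ e) w x + w [set p; q]).
Proof.
move=> nn sT eT ee K.
have splitT x : connect (adj (T :\ e)) u x || connect (adj (T :\ e)) v x.
  rewrite ee; apply: split_conn; exact: (gconnP _ (st_conn sT)).
have vK : v \notin K.
  rewrite inE; apply/negP => uv; apply: (negP (st_min sT eT)).
  apply: (gconn_root (u := u)) => x; case/orP: (splitT x) => // vx.
  exact: connect_trans uv vx.
split=> // p q pK qK pqE.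
set C := [set p; q] |: (T :\ e).
have pq : p != q by apply/negP => /eqP pq; move: qK; rewrite -pq pK.
have pqT : [set p; q] \notin T :\ e.
  apply/negP => pqT; move: qK; rewrite !inE; apply/negP; rewrite negbK.
  apply: (@connect_trans _ _ p); first by move: pK; rewrite inE.
  by apply: connect1; rewrite /adj pqT andbT.
have sCE : C \subset E.
  apply/subsetP => x; rewrite !inE => /orP[/eqP-> //|/andP[xe xT]].
  move: (subsetP (st_sub sT) x xT); rewrite !inE (negbTE xe) //.
have cC : gconnected C.
  have sTC : T :\ e \subset C by exact: subsetUr.
  have vq : connect (adj (T :\ e)) v q.
    by case/orP: (splitT q) => // uq; move: qK; rewrite inE uq.
  have up : connect (adj C) u p by apply: conn_mono sTC _; move: pK; rewrite inE.
  have uv : connect (adj C) u v.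
    apply: connect_trans up _; apply: connect_trans (connect1 (y := q) _) _.
      by rewrite /adj pq setU11.
    by rewrite conn_sym; apply: conn_mono sTC vq.
  apply: (gconn_root (u := u)) => x; case/orP: (splitT x) => ux.
    exact: conn_mono sTC ux.
  apply: connect_trans uv _; exact: conn_mono sTC ux.
apply: le_trans (mst_le nn sCE cC) _.
by rewrite big_setU1 //= addrC.
Qed.


Lemma graph2 E f : is_graph E -> f \in E -> #|f| = 2%N.
Proof. by move=> /forall_inP H fE; apply/eqP; exact: H. Qed.

Lemma D_bounds B E w (e : {set V}) (t : R) : is_graph E -> gconnected E -> weights_in B E w ->
  #|e| = 2%N -> e \notin E -> 0 <= t <= B ->
  0 <= mst E w - mst (e |: E) (upd w e t) /\
  ((exists S, cut_has_nonedge E S /\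
      mst E w - mst (e |: E) (upd w e t) <= w1 B E w S)
   \/ mst E w - mst (e |: E) (upd w e t) <= 0).
Proof.
move=> gE cE wE e2 eE /andP[t0 tB].
have nn : nonneg E w by move=> x /wE /andP[].
have nn' := @nonneg_upd E w e t nn t0.
have cE' : gconnected (e |: E) by apply: gconn_mono cE; exact: subsetUr.
split.
  have [T [sT ->]] := mst_att nn cE; rewrite subr_ge0.
  apply: le_trans (mst_le_tree _ (st_mono (subsetUr [set e] E) sT)) _.
  rewrite sum_upd_notin //; apply/negP => eT; move: eE.
  by rewrite (subsetP (st_sub sT) _ eT).
have [T [sT ->]] := mst_att nn' cE'.
have [eT|eT] := boolP (e \in T); last first.
  right; rewrite subr_le0 sum_upd_notin //.
  apply: mst_le_tree; case/and3P: sT => sTE cT mT.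
  apply/and3P; split=> //; apply/subsetP => x xT.
  move: (subsetP sTE x xT); rewrite !inE; case/orP => // /eqP xe.
  by move: eT; rewrite -xe xT.
left; move/eqP/cards2P: e2 => [u [v [uv ee]]].
have [vK H] := reconnect nn sT eT ee.
set K := [set x | connect (adj (T :\ e)) u x] in vK H.
have uK : u \in K by rewrite inE connect0.
exists K; split.
  apply/existsP; exists u; rewrite uK /=; apply/existsP; exists v.
  by rewrite in_setC vK /= -ee.
rewrite sum_upd_in //.
have key p q : p \in K -> q \notin K -> [set p; q] \in E ->
    mst E w - (t + \sum_(x in T :\ e) w x) <= w [set p; q].
  move=> pK qK pqE; have := H p q pK qK pqE.
  rewrite lerBlDr => h; apply: le_trans h _.
  by rewrite addrC lerD2l lerDr.
rewrite /w1 /rmin; apply: le_bigmin.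
  have [p [q [pK qK pqE]]] : exists p q, [/\ p \in K, q \notin K & [set p; q] \in E].
    case: (boolP [exists p, exists q, [&& adj E p q, p \in K & q \notin K]]).
      by move/existsP => [p /existsP [q /and3P [/andP [_ pqE] pK qK]]]; exists p, q.
    move/existsPn => Hn; exfalso; move/negP: vK; apply.
    apply: (@closed_conn (adj E) [pred x | x \in K] u v _ uK (gconnP _ cE u v)).
    move=> p q apq /= pK; apply/negPn/negP => qK.
    by move/existsPn: (Hn p) => /(_ q); rewrite apq pK qK.
  apply: le_trans (key _ _ pK qK pqE) _.
  by case/andP: (wE _ pqE).
move=> f /andP[fE cf].
have [p [q [pK qK fe]]] := cross_pair (graph2 gE fE) cf.
by rewrite fe; apply: key => //; rewrite -fe.
Qed.


Lemma lower_bound B E w S : is_graph E -> gconnected E -> weights_in B E w ->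
  cut_has_nonedge E S -> exists e : {set V},
  [/\ #|e| = 2%N, e \notin E &
   w1 B E w S <= mst E w - mst (e |: E) (upd w e 0)].
Proof.
move=> gE cE wE /existsP [u /andP [uS /existsP [v /andP [vS uvE]]]].
rewrite in_setC in vS.
have uv : u != v by apply/negP => /eqP uv; move: vS; rewrite -uv uS.
have nn : nonneg E w by move=> x /wE /andP[].
have nn' := @nonneg_upd E w [set u; v] 0 nn (lexx 0).
exists [set u; v]; split => //; first by rewrite cards2 uv.
have [T [sT ->]] := mst_att nn cE.
have [p [pth [up lp]]] : exists p, [/\ path (adj T) u p, uniq (u :: p) & last u p = v].
  move: (gconnP _ (st_conn sT) u v) => /connectP [p pth ->].
  by case/shortenP: pth => p' pth' up' _; exists p'.
have lS : last u p \notin S by rewrite lp.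
have [y [z [[ayz yS zS cuy czv] _]]] := path_cross pth up uS lS.
rewrite lp in czv.
case/andP: (ayz) => yz fT.
set f := [set y; z] in cuy czv fT.
have fE : f \in E := subsetP (st_sub sT) _ fT.
set C := [set u; v] |: (T :\ f).
have eTf : [set u; v] \notin T :\ f.
  by apply/negP => /setD1P [_ /(subsetP (st_sub sT))]; rewrite (negbTE uvE).
have sC : C \subset [set u; v] |: E.
  apply: setUS; apply/subsetP => x /setD1P [_ xT]; exact: subsetP (st_sub sT) _ xT.
have cC : gconnected C.
  have sTC : T :\ f \subset C by exact: subsetUr.
  have uy : connect (adj C) u y := conn_mono sTC cuy.
  have uz : connect (adj C) u z.
    apply: (@connect_trans _ _ v); first by apply: connect1; rewrite /adj uv setU11.
    by rewrite conn_sym; exact: conn_mono sTC czv.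
  apply: (gconn_root (u := u)) => x.
  case/orP: (split_conn z (gconnP _ (st_conn sT) y x)) => h.
    exact: connect_trans uy (conn_mono sTC h).
  exact: connect_trans uz (conn_mono sTC h).
have h1 := mst_le nn' sC cC.
rewrite big_setU1 //= upd_at add0r sum_upd_notin // in h1.
rewrite (big_setD1 _ fT) /=.
have h2 : w1 B E w S <= w f.
  by rewrite /w1 /rmin; apply: bigmin_le_cond; rewrite fE cross_of.
rewrite -addrA; apply: le_trans h2 _; rewrite lerDl subr_ge0.
exact: h1.
Qed.


Lemma sup_char (D : set R) (m : R) : (forall d, D d -> d <= m) ->
  (forall d, D d -> 0 <= d) -> (m = 0 \/ exists d, D d /\ m <= d) -> sup D = m.
Proof.
move=> ub ge0 H.
have hub : has_ubound D by exists m => y Dy; exact: ub.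
case: (Classical_Prop.classic (exists d, D d)) => [[d Dd]|nD]; last first.
  case: H => [->|[d [Dd _]]]; last by exfalso; apply: nD; exists d.
  by apply: sup_out => -[[d Dd] _]; apply: nD; exists d.
apply/eqP; rewrite eq_le; apply/andP; split.
  by apply: ge_sup; [exists d | move=> y Dy; exact: ub].
case: H => [->|[d' [Dd' md']]].
  exact: le_trans (ge0 _ Dd) (ub_le_sup hub Dd).
exact: le_trans md' (ub_le_sup hub Dd').
Qed.


Lemma first_step T x y : x != y -> connect (adj T) x y -> exists z, adj T x z.
Proof.
move=> xy /connectP [[|z p] /= pth lp]; first by move: xy; rewrite lp eqxx.
by case/andP: pth => xz _; exists z.
Qed.

Lemma term_le_sum w (A : {set {set V}}) f : f \in A -> nonneg A w ->
  w f <= \sum_(x in A) w x.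
Proof.
move=> fA nn; rewrite (big_setD1 _ fA) /= lerDl; apply: sumr_ge0 => x.
by rewrite !inE => /andP[_ /nn].
Qed.

Lemma three_distinct : (3 <= #|V|)%N ->
  exists a b c : V, [/\ a != b, c != a & c != b].
Proof.
move=> h3.
have : (0 < #|V|)%N by lia.
case/card_gt0P => a _.
have : (0 < #|[set~ a]|)%N by rewrite cardsC1; lia.
case/card_gt0P => b; rewrite !inE => ba.
have : (0 < #|~: [set a; b]|)%N.
  have := cardsC [set a; b]; rewrite cards2 => h.
  move: h3; rewrite -h; case: (a != b) => /=; lia.
case/card_gt0P => c; rewrite !inE negb_or => /andP[ca cb].
by exists a, b, c; rewrite eq_sym ba ca cb.
Qed.


Lemma w1_le_B B E w S : w1 B E w S <= B.
Proof. by rewrite /w1 /rmin; apply: bigmin_le_id. Qed.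

Lemma GS_eq (B : R) : 0 <= B -> (3 <= #|V|)%N -> GS V B = B.
Proof.
move=> B0 h3; apply: sup_char.
- move=> d [E [w [e [t [[gE cE wE] [[e2 eE tB cE'] ->]]]]]].
  have [D0 [[S [_ hS]]|hD]] := D_bounds gE cE wE e2 eE tB; rewrite ger0_norm //.
    exact: le_trans hS (w1_le_B _ _ _ _).
  exact: le_trans hD B0.
- by move=> d [E [w [e [t [_ [_ ->]]]]]].
right.
have [a [b [c [ab ca cb]]]] := three_distinct h3.
pose E0 := [set f : {set V} | (#|f| == 2) && (f != [set a; b])].
pose w0 := fun f : {set V} => if a \in f then B else 0.
pose e0 := [set a; b].
have neab (z : V) (s : {set V}) : z \in s -> z \notin [set a; b] -> s != [set a; b].
  by move=> zs zab; apply/negP => /eqP se; move: zab; rewrite -se zs.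
have cab : c \notin [set a; b] by rewrite !inE negb_or ca cb.
have edge x y : x != y -> [set x; y] != [set a; b] -> [set x; y] \in E0.
  by move=> xy ne; rewrite inE cards2 xy ne.
have nnw0 (A : {set {set V}}) : nonneg A w0 by move=> f _; rewrite /w0; case: ifP.
have e0E : e0 \notin E0 by rewrite inE eqxx andbF.
have cE0 : gconnected E0.
  apply/gconnP => x y; have [->|xy] := eqVneq x y; first exact: connect0.
  have [cx|cx] := eqVneq c x.
    by apply: connect1; rewrite /adj xy edge // (neab c) // -cx set21.
  have [cy|cy] := eqVneq c y.
    by apply: connect1; rewrite /adj xy edge // (neab c) // -cy set22.
  apply: (@connect_trans _ _ c); apply: connect1.
    have xc : x != c by rewrite eq_sym.
    by rewrite /adj xc edge // (neab c) // set22.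
  by rewrite /adj cy edge // (neab c) // set21.
exists `|mst E0 w0 - mst (e0 |: E0) (upd w0 e0 0)|; split; last first.
  apply: le_trans (ler_norm _); rewrite -[B]subr0; apply: lerB.
    apply: mst_ge.
      move=> T sT; have [z /andP [az azT]] := first_step ab (gconnP _ (st_conn sT) a b).
      apply: le_trans (term_le_sum azT (nnw0 T)); by rewrite /w0 set21.
    have ac : a != c by rewrite eq_sym.
    have acE : [set a; c] \in E0 by rewrite edge // (neab c) // set22.
    apply: le_trans (term_le_sum acE (nnw0 E0)); by rewrite /w0 set21.
  pose C := e0 |: [set f in E0 | a \notin f].
  have sC : C \subset e0 |: E0.
    by apply: setUS; apply/subsetP => f; rewrite inE => /andP[].
  have cC : gconnected C.
    apply: (gconn_root (u := b)) => x.
    have [->|xb] := eqVneq x b; first exact: connect0.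
    have [->|xa] := eqVneq x a.
      by apply: connect1; rewrite /adj eq_sym ab /C /e0 setUC setU11.
    have bx : b != x by rewrite eq_sym.
    have bxE : [set b; x] \in E0.
      have xab : x \notin [set a; b] by rewrite !inE negb_or xa xb.
      by rewrite edge // (neab x _ _ xab) // set22.
    have abx : a \notin [set b; x] by rewrite !inE negb_or ab eq_sym xa.
    apply: connect1; rewrite /adj bx /C; apply/setU1P; right.
    by rewrite in_set bxE abx.
  have := mst_le (@nonneg_upd E0 w0 e0 0 (nnw0 E0) (lexx 0)) sC cC.
  rewrite big1 // => f; rewrite /C !inE /upd => /orP [->//|/andP [_ af]].
  by case: ifP => // _; rewrite /w0 (negbTE af).
exists E0, w0, e0, 0; split.
  split => //; first by apply/forall_inP => f; rewrite inE => /andP[].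
  by move=> f _; rewrite /w0; case: ifP => _; rewrite ?lexx ?B0.
split => //; split => //.
- by rewrite cards2 ab.
- by rewrite lexx B0.
- by apply: gconn_mono cE0; exact: subsetUr.
Qed.


Lemma RS_eq B E w : 0 <= B -> is_graph E -> gconnected E -> weights_in B E w ->
  RS B E w = max_w1 B E w.
Proof.
move=> B0 gE cE wE; apply: sup_char.
- move=> d [e [t [[e2 eE tB] ->]]].
  have [D0 [[S [hS hD]]|hD]] := D_bounds gE cE wE e2 eE tB; rewrite ger0_norm //.
    by apply: le_trans hD _; rewrite /max_w1 /rmax; apply: le_bigmax_cond.
  by apply: le_trans hD _; rewrite /max_w1 /rmax; apply: bigmax_ge_id.
- by move=> d [e [t [_ ->]]].
have [/existsP [S0 hS0]|/existsPn hn] := boolP [exists S, cut_has_nonedge E S]; last first.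
  by left; rewrite /max_w1 big_pred0 // => S; apply/negbTE.
right.
have w1ge0 S : 0 <= w1 B E w S.
  by rewrite /w1 /rmin; apply: le_bigmin => // f /andP[/wE /andP[]].
rewrite /max_w1 /rmax (bigmax_eq_arg _ _ _ _ hS0); last by move=> S _; exact: w1ge0.
case: arg_maxP => // S hS _.
have [e [e2 eE h]] := lower_bound gE cE wE hS.
exists `|mst E w - mst (e |: E) (upd w e 0)|; split; last exact: le_trans h (ler_norm _).
by exists e, 0; split => //; split => //; rewrite lexx B0.
Qed.

End Aux.

Unset Implicit Arguments.

Theorem mainTheorem6 (R : realType) (V : finType) (B : R)
  (E : {set {set V}}) (w : {set V} -> R) :
  (3 <= #|V|)%N ->
  is_graph E -> gconnected E -> weights_in B E w ->
  RS B E w / GS V B = max_w1 B E w / B.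
Proof.
move=> h3 gE cE wE.
have B0 : 0 <= B.
  have [a [b [c [ab _ _]]]] := three_distinct h3.
  have [z /andP [_ azE]] := first_step ab (gconnP _ cE a b).
  by case/andP: (wE _ azE) => h1 h2; exact: le_trans h1 h2.
by rewrite GS_eq // RS_eq.
Qed.
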